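(* Let $p$ be a prime, $n\ge 3$, $N$ a positive integer, $T=(n-1)(n-2)/2+2(n-1)$, $v_1,v_2\in\mathbb{Z}_p^T$ fixed, $K,M$ independent uniform random vectors on $\mathbb{Z}_p^T$, and $D(x)=(2-x)v_1+(x-1)v_2+(x-1)(x-2)(K+xM)$. Let $\mathcal A:\mathbb{Z}_p^T\to\mathbb{Z}_p$ be an algorithm (a fixed function) whose success probability $q=\mathbb{P}(\mathcal A(\mathbf U)=Z_{n-1}(\mathbf U;p))$ is positive, where $\mathbf U$ is uniform on $\mathbb{Z}_p^T$. Let $\mathcal N$ be the number of $x\in\{3,4,\dots,p\}$ with $\mathcal A(D(x))=Z_{n-1}(D(x);p)$. Then $$\mathbb{P}\big(\mathcal N\ge (p-2)q/2\big)\ge 1-\frac{1}{(p-2)q^2},$$ where the probability is over $K$ and $M$.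
   Context: Arithmetic is in $\mathbb{Z}_p$; elements of $\{3,\dots,p\}$ are viewed as residues mod $p$. For $\boldsymbol\sigma\in\{-1,1\}^{m}$, $I_m(\boldsymbol\sigma)=|\{(i,j):1\le i<j\le m,\ \sigma_i\ne\sigma_j\}|$ and $f(m,\boldsymbol\sigma)=\frac{m(m-1)}2-m-I_m(\boldsymbol\sigma)$. A vector in $\mathbb{Z}_p^T$ with $T=m(m-1)/2+2m$ is read as $(\mathbf J,\mathbf B,\mathbf C)$ (first $m(m-1)/2$ coordinates are $J_{ij}$, $1\le i<j\le m$, then $B_1,\dots,B_m$, then $C_1,\dots,C_m$), and $$Z_m(\mathbf J,\mathbf B,\mathbf C;p)=\sum_{\boldsymbol\sigma\in\{-1,1\}^m}2^{Nf(m,\boldsymbol\sigma)}\Big(\prod_{i:\sigma_i=-1}B_i\Big)\Big(\prod_{i:\sigma_i=+1}C_i\Big)\Big(\prod_{i<j:\sigma_i\ne\sigma_j}J_{ij}\Big)\pmod p.$$ *)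

(* Defs.v *)
From HB Require Import structures.
From mathcomp Require Import all_boot all_order all_algebra.
Set Implicit Arguments. Unset Strict Implicit. Unset Printing Implicit Defensive.
Import Order.TTheory GRing.Theory Num.Theory.
Local Open Scope ring_scope.

Definition Tdim (m : nat) : nat := (m * (m - 1) %/ 2 + 2 * m)%N.

(* 0-based index layout of (J, B, C); pairs (i,j), i<j, in lexicographic order. *)
Definition Jidx (m i j : nat) : nat := (i * m - (i * i.+1) %/ 2 + (j - i - 1))%N.
Definition Bidx (m i : nat) : nat := (m * (m - 1) %/ 2 + i)%N.
Definition Cidx (m i : nat) : nat := (m * (m - 1) %/ 2 + m + i)%N.

(* k-th coordinate (0-based) of a row vector, 0 if out of range. *)
Definition coord {R : nzRingType} {t : nat} (v : 'rV[R]_t) (k : nat) : R :=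
  odflt 0 (omap (v ord0) (insub k)).

(* sigma encoded as s : {ffun 'I_m -> bool}, s i = true <-> sigma_i = +1 *)
Definition Inv (m : nat) (s : {ffun 'I_m -> bool}) : nat :=
  #|[set ij : 'I_m * 'I_m | (ij.1 < ij.2)%N && (s ij.1 != s ij.2)]|.

Definition fexp (m : nat) (s : {ffun 'I_m -> bool}) : int :=
  ((m * (m - 1) %/ 2)%:Z - m%:Z - (Inv s)%:Z)%R.

Definition Zpart (p N m : nat) (v : 'rV['F_p]_(Tdim m)) : 'F_p :=
  \sum_(s : {ffun 'I_m -> bool})
     (2%:R : 'F_p) ^ ((N%:Z) * fexp s)
     * (\prod_(i : 'I_m | ~~ s i) coord v (Bidx m i))
     * (\prod_(i : 'I_m | s i) coord v (Cidx m i))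
     * (\prod_(ij : 'I_m * 'I_m | (ij.1 < ij.2)%N && (s ij.1 != s ij.2))
          coord v (Jidx m ij.1 ij.2)).

Definition Dvec (p t : nat) (v1 v2 K M : 'rV['F_p]_t) (x : 'F_p) : 'rV['F_p]_t :=
  (2 - x) *: v1 + (x - 1) *: v2 + ((x - 1) * (x - 2)) *: (K + x *: M).

Definition succ_prob (p N m : nat) (A : 'rV['F_p]_(Tdim m) -> 'F_p) : rat :=
  (#|[set U : 'rV['F_p]_(Tdim m) | A U == Zpart N U]|%:R
    / #|{: 'rV['F_p]_(Tdim m)}|%:R)%R.

Definition Ncount (p N m : nat) (A : 'rV['F_p]_(Tdim m) -> 'F_p)
    (v1 v2 K M : 'rV['F_p]_(Tdim m)) : nat :=
  count (fun x : nat => A (Dvec v1 v2 K M x%:R) == Zpart N (Dvec v1 v2 K M x%:R))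
        (iota 3 (p - 2)).

(* Main.v *)
Require Import Defs.
From HB Require Import structures.
From mathcomp Require Import all_boot all_order all_algebra.
From mathcomp Require Import ring lra zify.
Import Order.TTheory GRing.Theory Num.Theory.
Local Open Scope ring_scope.

Lemma Fp_neq (p x y : nat) : prime p -> (x < y)%N -> (y - x < p)%N ->
  (x%:R : 'F_p) != y%:R.
Proof.
move=> hp xy yxp; apply/eqP => h.
have e : ((y - x)%:R : 'F_p) = 0.
  rewrite (natrB _ (ltnW xy)) h. exact: subrr.
move/eqP: e; rewrite -(dvdn_pcharf (pchar_Fp hp)) => /dvdn_leq.
rewrite subn_gt0 xy => /(_ isT). rewrite leqNgt yxp. done.
Qed.

Lemma Dvec_inj1 p t (v1 v2 : 'rV['F_p]_t) (a : 'F_p) :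
  (a - 1) * (a - 2) != 0 ->
  injective (fun KM : 'rV['F_p]_t * 'rV['F_p]_t => (Dvec v1 v2 KM.1 KM.2 a, KM.2)).
Proof.
move=> nz [K M] [K' M'] /= [h hM]; subst M'.
by move: h; rewrite /Dvec => /addrI /(scalerI nz) /addIr ->.
Qed.

Lemma diff_sc p t (a b : 'F_p) (K M : 'rV['F_p]_t) :
  (K + a *: M) - (K + b *: M) = (a - b) *: M.
Proof. by rewrite opprD addrACA subrr add0r scalerBl. Qed.

Lemma Dvec_inj2 p t (v1 v2 : 'rV['F_p]_t) (a b : 'F_p) :
  (a - 1) * (a - 2) != 0 -> (b - 1) * (b - 2) != 0 -> a != b ->
  injective (fun KM : 'rV['F_p]_t * 'rV['F_p]_t =>
     (Dvec v1 v2 KM.1 KM.2 a, Dvec v1 v2 KM.1 KM.2 b)).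
Proof.
move=> na nb ab [K M] [K' M'] /= [h1 h2].
move: h1; rewrite /Dvec => /addrI /(scalerI na) h1.
move: h2; rewrite /Dvec => /addrI /(scalerI nb) h2.
have hM : M = M'.
  have ab0 : a - b != 0 by rewrite subr_eq0.
  apply: (scalerI ab0).
  by rewrite -(diff_sc _ _ a b K M) -(diff_sc _ _ a b K' M') h1 h2.
by subst M'; move/addIr: h1 => ->.
Qed.

Lemma sum_ind (V : finType) (g : pred V) :
  \sum_u ((g u)%:R : rat) = #|[set u | g u]|%:R.
Proof.
transitivity (\sum_(u in [set u | g u]) (1 : rat)); last by rewrite sumr_const.
rewrite [RHS]big_mkcond; apply: eq_bigr => u _; rewrite inE; by case: (g u).
Qed.

Lemma sum_inj (S : finType) (h : S -> S) (F : S -> rat) :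
  injective h -> \sum_z F (h z) = \sum_z F z.
Proof. by move=> hi; rewrite [RHS](reindex_inj hi). Qed.

Lemma sum_pair1 (V : finType) (g : pred V) :
  \sum_(z : V * V) ((g z.1)%:R : rat) = #|V|%:R * #|[set u | g u]|%:R.
Proof.
rewrite -(pair_big xpredT xpredT (fun u w => ((g u)%:R : rat))) /=.
under eq_bigr do rewrite sumr_const.
by rewrite -sum_ind mulr_sumr; apply: eq_bigr => u _; rewrite mulr_natl.
Qed.

Lemma sum_pair2 (V : finType) (g : pred V) :
  \sum_(z : V * V) ((g z.1 && g z.2)%:R : rat) = #|[set u | g u]|%:R ^+ 2.
Proof.
rewrite -(pair_big xpredT xpredT (fun u w => ((g u && g w)%:R : rat))) /=.
rewrite expr2 -sum_ind mulr_suml; apply: eq_bigr => u _.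
by rewrite mulr_sumr; apply: eq_bigr => w _; rewrite -natrM mulnb.
Qed.

Lemma count_natr (I : Type) (a : pred I) (s : seq I) :
  (count a s)%:R = \sum_(i <- s) ((a i)%:R : rat).
Proof.
elim: s => [|x s IH]; first by rewrite big_nil.
by rewrite /= big_cons natrD IH.
Qed.

Lemma sum_seq_const (I : Type) (s : seq I) (c : rat) :
  \sum_(i <- s) c = (size s)%:R * c.
Proof.
elim: s => [|x s IH]; first by rewrite big_nil mul0r.
by rewrite big_cons IH /= -addn1 natrD mulrDl mul1r addrC.
Qed.

Lemma core (S : finType) (I : eqType) (s : seq I) (X : I -> S -> bool) (q : rat) :
  uniq s -> 0 < q -> (0 < #|S|)%N ->
  (forall i, i \in s -> \sum_z ((X i z)%:R : rat) = q * #|S|%:R) ->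
  (forall i j, i \in s -> j \in s -> i != j ->
      \sum_z ((X i z && X j z)%:R : rat) = q^+2 * #|S|%:R) ->
  1 - 1 / ((size s)%:R * q ^+ 2) <=
  #|[set z : S | (size s)%:R * q / 2 <= (count (X^~ z) s)%:R :> rat]|%:R / #|S|%:R.
Proof.
move=> us q0 S0 h1 h2.
set k : rat := (size s)%:R.
set c : rat := #|S|%:R.
have c0 : 0 < c by rewrite ltr0n.
set G := [set z : S | _].
set nz := fun z : S => (count (X^~ z) s)%:R : rat.
have sum1 : \sum_z nz z = k * q * c.
  rewrite /nz; under eq_bigr do rewrite count_natr.
  rewrite exchange_big /= big_seq.
  under eq_bigr => i Hi do rewrite h1 //.
  by rewrite -big_seq sum_seq_const mulrA.
have sum2 : \sum_z nz z ^+ 2 = k * (k * q^+2 * c + (q - q^+2) * c).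
  rewrite /nz; under eq_bigr do rewrite count_natr expr2 mulr_suml.
  under eq_bigr do under eq_bigr do rewrite mulr_sumr.
  rewrite exchange_big /=.
  under eq_bigr do rewrite exchange_big /=.
  rewrite big_seq.
  under eq_bigr => i Hi.
    rewrite big_seq.
    under eq_bigr => j Hj.
      have -> : \sum_z ((X i z)%:R * (X j z)%:R : rat)
           = q^+2 * c + (j == i)%:R * ((q - q^+2) * c).
        under eq_bigr do rewrite -natrM mulnb.
        have [->|ne] := eqVneq j i.
          under eq_bigr do rewrite andbb.
          by rewrite h1 //= mul1r /c; ring.
        by rewrite (h2 i j) 1?eq_sym //= mul0r addr0.
      over.
    rewrite -big_seq big_split /= sum_seq_const -mulr_suml -count_natr.
    rewrite (count_uniq_mem _ us) Hi mul1r.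
    over.
  by rewrite -big_seq sum_seq_const -/k; ring.
have sumV : \sum_z (nz z - k * q) ^+ 2 = c * k * (q - q ^+ 2).
  have E : forall z, (nz z - k * q) ^+ 2 = nz z ^+ 2 - (2 * k * q) * nz z + (k * q) ^+ 2.
    by move=> z; ring.
  under eq_bigr do rewrite E.
  rewrite big_split big_split /= sumrN -mulr_sumr sum2 sum1 sumr_const mulr_natl -/c.
  ring.
have nz0 : forall z, 0 <= nz z by move=> z; rewrite /nz ler0n.
have bad : #|~: G|%:R * (k * q / 2) ^+ 2 <= c * k * (q - q ^+ 2).
  rewrite -sumV (bigID (fun z => z \in G)) /= ler_wpDl ?sumr_ge0 //.
    by move=> z _; rewrite sqr_ge0.
  have -> : #|~: G|%:R * (k * q / 2) ^+ 2 = \sum_(z in ~: G) (k * q / 2) ^+ 2.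
    by rewrite sumr_const mulr_natl.
  rewrite [X in _ <= X](eq_bigl (fun z => z \in ~: G)); last by move=> z; rewrite in_setC.
  apply: ler_sum => z.
  rewrite !inE -ltNge => zG.
  have := nz0 z; have : 0 <= k by rewrite ler0n.
  move=> k0 n0; nra.
have cardG : #|G|%:R = c - #|~: G|%:R.
  by rewrite /c -(cardsC G) natrD addrK.
have [k0|kpos] := eqVneq (size s) 0%N.
  have -> : G = setT.
    by apply/setP => z; rewrite !inE /k k0 !mul0r ler0n.
  by rewrite cardsT /k k0 mul0r invr0 mulr0 subr0 -/c divff // gt_eqF.
have kgt : 0 < k by rewrite ltr0n lt0n.
set b : rat := #|~: G|%:R.
have q2 : q - q ^+ 2 <= 1 / 4 by have := sqr_ge0 (2 * q - 1); nra.
have key : b * (k * q ^+ 2) <= c.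
  rewrite -(ler_pM2l kgt).
  have : c * k * (q - q ^+ 2) <= c * k * (1 / 4).
    by rewrite ler_wpM2l // mulr_ge0 // ltW.
  move: bad; rewrite -/b => bad h.
  have : b * (k * q / 2) ^+ 2 <= c * k * (1 / 4) by apply: le_trans h.
  have -> : b * (k * q / 2) ^+ 2 = (k * (b * (k * q ^+ 2))) / 4 by field.
  have -> : c * k * (1 / 4) = (k * c) / 4 by field.
  by rewrite ler_pM2r // invr_gt0.
have kq : 0 < k * q ^+ 2 by rewrite mulr_gt0 // exprn_gt0.
rewrite cardG mulrBl divff ?gt_eqF // lerD2l lerN2 ler_pdivrMr // mul1r.
by rewrite mulrC ler_pdivlMr.
Qed.


Lemma nz12 (p i : nat) : prime p -> (3 <= i)%N -> (i <= p)%N ->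
  ((i%:R : 'F_p) - 1) * (i%:R - 2) != 0.
Proof.
move=> hp i3 ip.
apply/mulf_neq0; rewrite subr_eq0 eq_sym.
  have := Fp_neq _ 1 i hp (leq_trans (isT : (1 < 3)%N) i3).
  rewrite mulr1n; apply; lia.
have := Fp_neq _ 2 i hp (leq_trans (isT : (2 < 3)%N) i3).
apply; lia.
Qed.

Lemma neqij (p i j : nat) : prime p -> (3 <= i)%N -> (i <= p)%N ->
  (3 <= j)%N -> (j <= p)%N -> i != j -> (i%:R : 'F_p) != j%:R.
Proof.
move=> hp i3 ip j3 jp ij.
have [lt|lt] : (i < j)%N \/ (j < i)%N.
  by case: ltngtP ij => // _ _; [left|right].
  apply: (Fp_neq _ i j hp lt); lia.
rewrite eq_sym; apply: (Fp_neq _ j i hp lt); lia.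
Qed.

Theorem lemma3 (p n N : nat) (hp : prime p) (hn : (3 <= n)%N) (hN : (0 < N)%N)
  (v1 v2 : 'rV['F_p]_(Tdim n.-1)) (A : 'rV['F_p]_(Tdim n.-1) -> 'F_p) :
  0 < succ_prob N A ->
  (#|[set KM : 'rV['F_p]_(Tdim n.-1) * 'rV['F_p]_(Tdim n.-1) |
        (p - 2)%:R * succ_prob N A / 2 <= (Ncount N A v1 v2 KM.1 KM.2)%:R :> rat]|%:R
     / #|{: 'rV['F_p]_(Tdim n.-1) * 'rV['F_p]_(Tdim n.-1)}|%:R : rat)
  >= 1 - 1 / ((p - 2)%:R * succ_prob N A ^+ 2).
Proof.
move=> qpos.
pose V := 'rV['F_p]_(Tdim n.-1).
pose g : pred V := fun U => A U == Zpart N U.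
have cV : (0 < #|V|)%N by apply/card_gt0P; exists 0.
have cV0 : (#|V|%:R : rat) != 0 by rewrite pnatr_eq0 -lt0n.
have qdef : succ_prob N A = #|[set U | g U]|%:R / #|V|%:R by [].
pose X := fun (x : nat) (KM : V * V) => g (Dvec v1 v2 KM.1 KM.2 x%:R).
have h1 : forall i, i \in iota 3 (p - 2) ->
    \sum_z ((X i z)%:R : rat) = succ_prob N A * #|{: V * V}|%:R.
  move=> i; rewrite mem_iota => /andP [i3 ip].
  have ip' : (i <= p)%N.
    have := prime_gt1 hp; lia.
  have na := @nz12 _ _ hp i3 ip'.
  have -> : \sum_z ((X i z)%:R : rat) =
      \sum_z ((g ((fun KM : V * V => (Dvec v1 v2 KM.1 KM.2 i%:R, KM.2)) z).1)%:R : rat).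
    by apply: eq_bigr.
  rewrite (@sum_inj _ _ (fun z : V * V => ((g z.1)%:R : rat)) (@Dvec_inj1 _ _ v1 v2 _ na)).
  rewrite sum_pair1 qdef card_prod natrM.
  field; exact: cV0.
have h2 : forall i j, i \in iota 3 (p - 2) -> j \in iota 3 (p - 2) -> i != j ->
    \sum_z ((X i z && X j z)%:R : rat) = succ_prob N A ^+ 2 * #|{: V * V}|%:R.
  move=> i j; rewrite !mem_iota => /andP [i3 ip] /andP [j3 jp] ij.
  have ip' : (i <= p)%N.
    have := prime_gt1 hp; lia.
  have jp' : (j <= p)%N.
    have := prime_gt1 hp; lia.
  have na := @nz12 _ _ hp i3 ip'.
  have nb := @nz12 _ _ hp j3 jp'.
  have nab := @neqij _ _ _ hp i3 ip' j3 jp' ij.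
  have -> : \sum_z ((X i z && X j z)%:R : rat) =
      \sum_z (((fun w : V * V => g w.1 && g w.2)
         ((fun KM : V * V => (Dvec v1 v2 KM.1 KM.2 i%:R, Dvec v1 v2 KM.1 KM.2 j%:R)) z))%:R : rat).
    by apply: eq_bigr.
  rewrite (@sum_inj _ _ (fun z : V * V => ((g z.1 && g z.2)%:R : rat)) (@Dvec_inj2 _ _ v1 v2 _ _ na nb nab)).
  rewrite sum_pair2 qdef card_prod natrM.
  field; exact: cV0.
have S0 : (0 < #|{: V * V}|)%N by rewrite card_prod muln_gt0 cV.
have := @core _ _ _ X _ (iota_uniq 3 (p - 2)) qpos S0 h1 h2.
rewrite size_iota.
exact.
Qed.
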